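(* There exist an integer $K\ge1$, signs $\varepsilon_1,\dots,\varepsilon_K\in\{-1,1\}$ and labels $x_{1,k},x_{2,k}\in\{x^+,x^-,x^{\natural+},x^{\natural-}\}$ ($k=1,\dots,K$), such that, setting $\mathcal U(x^+)=\sum_{k=1}^K\varepsilon_k\,x_{1,k}^{\otimes 2}\otimes x_{2,k}^{\otimes2}$ (an order-4 tensor on $\mathbb R^{2n}$, where $x^-=Mx^+$), one has for all $x^+\in\mathbb R^{2n}$ $$f(x^+)=\Big\langle\sum_{i=1}^m(a_i^+)^{\otimes4},\ \mathcal U(x^+)\Big\rangle=c\,\langle\mathcal T,\mathcal U(x^+)\rangle.$$
   Context: Let $n,m\ge 1$, $a_1,\dots,a_m\in\mathbb C^n$ and $x^\natural\in\mathbb C^n$. For $a,b\in\mathbb C^n$ write $\langle a,b\rangle=\sum_{j}a_j\overline{b_j}$. Let $y_i=|\langle a_i,x^\natural\rangle|^2$. For $v\in\mathbb C^n$ put $v^+=(\mathrm{Re}\,v,\mathrm{Im}\,v)\in\mathbb R^{2n}$ and $v^-=Mv^+=(-\mathrm{Im}\,v,\mathrm{Re}\,v)$, where $M=\begin{bmatrix}0&-I_n\\ I_n&0\end{bmatrix}$. The map $x\mapsto x^+$ identifies $\mathbb C^n$ with $\mathbb R^{2n}$. Define $f:\mathbb R^{2n}\to\mathbb R$ by $f(x^+)=\sum_{i=1}^m\big(|\langle a_i,x\rangle|^2-y_i\big)^2$. Fix $\sigma>0$ (in the paper, $\sigma^2=\mathrm{Var}((a_i^+)_1)$ for random measurement vectors),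 set $c=m\sigma^4$ and $\mathcal T=\frac1c\sum_{i=1}^m(a_i^+)^{\otimes4}$. The inner product of order-4 tensors is the sum of entrywise products. *)

(* Defs.v *)
From mathcomp Require Import all_boot all_order all_algebra.
From mathcomp.real_closed Require Import complex.
Set Implicit Arguments.
Unset Strict Implicit.
Unset Printing Implicit Defensive.
Import Order.TTheory GRing.Theory Num.Theory.
Local Open Scope ring_scope.

Section PR.
Variable R : rcfType.
Variable n : nat.

Definition cinner (a b : 'rV[R[i]]_n) : R[i] :=
  \sum_(j < n) a 0 j * (b 0 j)^*%C.

Definition csqnorm (z : R[i]) : R := Normc.normc z ^+ 2.

Definition vplus (v : 'rV[R[i]]_n) : 'rV[R]_(n + n) :=
  row_mx (\row_j @complex.Re R (v 0 j)) (\row_j @complex.Im R (v 0 j)).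

Definition cvec (xp : 'rV[R]_(n + n)) : 'rV[R[i]]_n :=
  \row_j Complex (xp 0 (lshift n j)) (xp 0 (rshift n j)).

Definition Mmat : 'M[R]_(n + n) := block_mx 0 (- 1%:M) 1%:M 0.

Definition Mapp (w : 'rV[R]_(n + n)) : 'rV[R]_(n + n) := (Mmat *m w^T)^T.

Definition vminus (v : 'rV[R[i]]_n) : 'rV[R]_(n + n) := Mapp (vplus v).

Definition fobj (m : nat) (a : 'I_m -> 'rV[R[i]]_n) (xnat : 'rV[R[i]]_n)
  (xp : 'rV[R]_(n + n)) : R :=
  \sum_(i < m) (csqnorm (cinner (a i) (cvec xp)) - csqnorm (cinner (a i) xnat)) ^+ 2.

Definition tensor4 := 'I_(n + n) -> 'I_(n + n) -> 'I_(n + n) -> 'I_(n + n) -> R.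

Definition tinner (A B : tensor4) : R :=
  \sum_(i1 < n + n) \sum_(i2 < n + n) \sum_(i3 < n + n) \sum_(i4 < n + n)
     A i1 i2 i3 i4 * B i1 i2 i3 i4.

Definition tadd (A B : tensor4) : tensor4 := fun i j k l => A i j k l + B i j k l.
Definition tscale (c : R) (A : tensor4) : tensor4 := fun i j k l => c * A i j k l.
Definition tzero : tensor4 := fun _ _ _ _ => 0.
Definition tsum (I : finType) (F : I -> tensor4) : tensor4 :=
  fun i j k l => \sum_(s : I) F s i j k l.

Definition tpow4 (u : 'rV[R]_(n + n)) : tensor4 :=
  fun i j k l => u 0 i * u 0 j * u 0 k * u 0 l.

Definition tpow22 (u v : 'rV[R]_(n + n)) : tensor4 :=
  fun i j k l => u 0 i * u 0 j * v 0 k * v 0 l.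

End PR.

Inductive label := Lxp | Lxm | Lxnp | Lxnm.

Definition label_vec (R : rcfType) (n : nat) (l : label)
  (xp : 'rV[R]_(n + n)) (xnat : 'rV[R[i]]_n) : 'rV[R]_(n + n) :=
  match l with
  | Lxp => xp
  | Lxm => Mapp xp
  | Lxnp => vplus xnat
  | Lxnm => vminus xnat
  end.

Definition Utensor (R : rcfType) (n K : nat) (eps : 'I_K -> R)
  (l1 l2 : 'I_K -> label) (xnat : 'rV[R[i]]_n) (xp : 'rV[R]_(n + n)) : tensor4 R n :=
  tsum (fun k : 'I_K => tscale (eps k)
          (tpow22 (label_vec (l1 k) xp xnat) (label_vec (l2 k) xp xnat))).

(* Main.v *)
Require Import Defs.
From mathcomp Require Import all_boot all_order all_algebra.
From mathcomp.real_closed Require Import complex.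
From mathcomp Require Import ring lra.
Import Order.TTheory GRing.Theory Num.Theory.
Local Open Scope ring_scope.

Section H.
Variable R : rcfType.
Variable n : nat.

Definition dot (u v : 'rV[R]_(n + n)) : R := \sum_(j < n + n) u 0 j * v 0 j.

Lemma Re_sum (F : 'I_n -> R[i]) :
  complex.Re (\sum_(j < n) F j) = \sum_(j < n) complex.Re (F j).
Proof.
elim/big_rec2: _ => //.
by move=> j y1 y2 _ <-; case: (F j) => a b; case: y2.
Qed.

Lemma Im_sum (F : 'I_n -> R[i]) :
  complex.Im (\sum_(j < n) F j) = \sum_(j < n) complex.Im (F j).
Proof.
elim/big_rec2: _ => //.
by move=> j y1 y2 _ <-; case: (F j) => a b; case: y2.
Qed.

Lemma csqnormE (z : R[i]) : csqnorm z = complex.Re z ^+ 2 + complex.Im z ^+ 2.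
Proof.
case: z => a b; rewrite /csqnorm /= sqr_sqrtr //.
by rewrite addr_ge0 // sqr_ge0.
Qed.

Lemma MappE (w : 'rV[R]_(n + n)) : Mapp w = row_mx (- rsubmx w) (lsubmx w).
Proof.
rewrite /Mapp /Mmat -{1}(hsubmxK w) tr_row_mx mul_block_col.
by rewrite !mul0mx mulNmx !mul1mx add0r addr0 tr_col_mx linearN /= !trmxK.
Qed.

Lemma dot_split (u v : 'rV[R]_(n + n)) :
  dot u v = \sum_(j < n) u 0 (lshift n j) * v 0 (lshift n j)
          + \sum_(j < n) u 0 (rshift n j) * v 0 (rshift n j).
Proof. by rewrite /dot big_split_ord. Qed.

Lemma csq_cinner (a x : 'rV[R[i]]_n) :
  csqnorm (cinner a x) = dot (vplus a) (vplus x) ^+ 2 + dot (vplus a) (Mapp (vplus x)) ^+ 2.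
Proof.
rewrite csqnormE /cinner Re_sum Im_sum MappE !dot_split /vplus.
rewrite row_mxKl row_mxKr.
congr (_ ^+ 2 + _ ^+ 2).
  rewrite -big_split /=; apply: eq_bigr => j _.
  rewrite !row_mxEl !row_mxEr !mxE.
  by case: (a 0 j) => p q; case: (x 0 j) => u v /=; ring.
rewrite -big_split /=; apply: eq_bigr => j _.
rewrite !row_mxEl !row_mxEr !mxE.
by case: (a 0 j) => p q; case: (x 0 j) => u v /=; ring.
Qed.

Lemma vplus_cvec (xp : 'rV[R]_(n + n)) : vplus (cvec xp) = xp.
Proof.
rewrite -{2}(hsubmxK xp) /vplus; congr row_mx; apply/rowP => j; by rewrite !mxE.
Qed.


Lemma tinner_sumr (I : finType) (A : tensor4 R n) (G : I -> tensor4 R n) :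
  tinner A (tsum G) = \sum_k tinner A (G k).
Proof.
rewrite /tinner /tsum [RHS]exchange_big; apply: eq_bigr => i1 _.
rewrite [RHS]exchange_big; apply: eq_bigr => i2 _.
rewrite [RHS]exchange_big; apply: eq_bigr => i3 _.
rewrite [RHS]exchange_big; apply: eq_bigr => i4 _.
by rewrite big_distrr.
Qed.

Lemma tinner_suml (I : finType) (B : tensor4 R n) (F : I -> tensor4 R n) :
  tinner (tsum F) B = \sum_k tinner (F k) B.
Proof.
rewrite /tinner /tsum [RHS]exchange_big; apply: eq_bigr => i1 _.
rewrite [RHS]exchange_big; apply: eq_bigr => i2 _.
rewrite [RHS]exchange_big; apply: eq_bigr => i3 _.
rewrite [RHS]exchange_big; apply: eq_bigr => i4 _.
by rewrite big_distrl.
Qed.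

Lemma tinner_scaler (A B : tensor4 R n) e :
  tinner A (tscale e B) = e * tinner A B.
Proof.
rewrite /tinner /tscale mulr_sumr; apply: eq_bigr => i1 _.
rewrite mulr_sumr; apply: eq_bigr => i2 _.
rewrite mulr_sumr; apply: eq_bigr => i3 _.
rewrite mulr_sumr; apply: eq_bigr => i4 _.
by rewrite mulrCA.
Qed.

Lemma tinner_scalel (A B : tensor4 R n) e :
  tinner (tscale e A) B = e * tinner A B.
Proof.
rewrite /tinner /tscale mulr_sumr; apply: eq_bigr => i1 _.
rewrite mulr_sumr; apply: eq_bigr => i2 _.
rewrite mulr_sumr; apply: eq_bigr => i3 _.
rewrite mulr_sumr; apply: eq_bigr => i4 _.
by rewrite mulrA.
Qed.

Lemma tinner_pow (w u v : 'rV[R]_(n + n)) :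
  tinner (tpow4 w) (tpow22 u v) = dot w u ^+ 2 * dot w v ^+ 2.
Proof.
rewrite /dot !expr2 -!mulrA big_distrl /tinner; apply: eq_bigr => i1 _.
rewrite big_distrl big_distrr; apply: eq_bigr => i2 _.
rewrite big_distrl big_distrr big_distrr; apply: eq_bigr => i3 _.
rewrite big_distrr big_distrr big_distrr; apply: eq_bigr => i4 _.
rewrite /tpow4 /tpow22 /=; ring.
Qed.

End H.

Definition lab (k : nat) : label :=
  match k with 0 => Lxp | 1 => Lxm | 2 => Lxnp | _ => Lxnm end%N.
Definition lsg (R : rcfType) (l : label) : R :=
  match l with Lxp | Lxm => 1 | _ => -1 end.

Theorem proposition1 (R : rcfType) (n m : nat) (hn : (1 <= n)%N) (hm : (1 <= m)%N)
  (a : 'I_m -> 'rV[R[i]]_n) (xnat : 'rV[R[i]]_n) (sigma : R) (hsigma : 0 < sigma) :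
  let c := m%:R * sigma ^+ 4 in
  let T := tscale c^-1 (tsum (fun i : 'I_m => tpow4 (vplus (a i)))) in
  exists (K : nat) (eps : 'I_K -> R) (l1 l2 : 'I_K -> label),
    (1 <= K)%N /\ (forall k, eps k = 1 \/ eps k = -1) /\
    forall xp : 'rV[R]_(n + n),
      fobj a xnat xp
        = tinner (tsum (fun i : 'I_m => tpow4 (vplus (a i)))) (Utensor eps l1 l2 xnat xp)
      /\ tinner (tsum (fun i : 'I_m => tpow4 (vplus (a i)))) (Utensor eps l1 l2 xnat xp)
        = c * tinner T (Utensor eps l1 l2 xnat xp).
Proof.
move=> c T.
exists 16%N, (fun k : 'I_16 => lsg R (lab (k %/ 4)) * lsg R (lab (k %% 4))),
  (fun k : 'I_16 => lab (k %/ 4)), (fun k : 'I_16 => lab (k %% 4)).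
split=> //; split.
  move=> k; case: (lab (k %/ 4)); case: (lab (k %% 4)) => /=;
    rewrite ?mulr1 ?mulrN1 ?opprK; by [left | right].
move=> xp; split; last first.
  have c0 : c != 0 by rewrite /c mulf_neq0 // ?pnatr_eq0 -?lt0n // expf_neq0 // gt_eqF.
  by rewrite /T tinner_scalel mulrA mulfV // mul1r.
rewrite tinner_suml /fobj; apply: eq_bigr => i _.
rewrite /Utensor tinner_sumr.
under eq_bigr do rewrite tinner_scaler tinner_pow.
rewrite !big_ord_recr big_ord0 /=.
rewrite !csq_cinner vplus_cvec /vminus.
ring.
Qed.
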